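(* Let $\pi:\mathbb R^n\times[0,\infty]\to[0,\infty]$ be a price function such that there is a function $f:\mathbb R^n\to[0,\infty)$ with $\pi(\mathbf q,v)=f(\mathbf q)^2/v$ for all $\mathbf q\in\mathbb R^n$, $v\in[0,\infty]$. Then $\pi$ is arbitrage-free if and only if $f$ is a semi-norm, i.e. $f(c\mathbf q)=|c|f(\mathbf q)$ for all $c\in\mathbb R$, $\mathbf q\in\mathbb R^n$, and $f(\mathbf q_1+\mathbf q_2)\le f(\mathbf q_1)+f(\mathbf q_2)$ for all $\mathbf q_1,\mathbf q_2\in\mathbb R^n$.
   Context: Conventions: $a/0=\infty$ for $a>0$, $0/0=0$, $a/\infty=0$, and $0\cdot\infty=0$. A query is a pair $(\mathbf q,v)$ with $\mathbf q\in\mathbb R^n$ and $v\in[0,\infty]$. The determinacy relation $\mathbf S\rightarrow\mathbf Q$ between finite multisets of queries and queries is the smallest relation satisfying: (Summation) for every $k\ge 0$, $\{(\mathbf q_1,v_1),\ldots,(\mathbf q_k,v_k)\}\rightarrow(\mathbf q_1+\cdots+\mathbf q_k,\,v_1+\cdots+v_k)$; (Scalar multiplication) for every $c\in\mathbb R$, $\{(\mathbf q,v)\}\rightarrow(c\mathbf q,c^2v)$; (Relaxation) $\{(\mathbf q,v)\}\rightarrow(\mathbf q,v')$ whenever $v\le v'$; (Transitivity) if $\mathbf S_1\rightarrow\mathbf Q_1,\ldots,\mathbf S_k\rightarrow\mathbf Q_k$ and $\{\mathbf Q_1,\ldots,\mathbf Q_k\}\rightarrow\mathbf Q$, then $\mathbf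 S_1\uplus\cdots\uplus\mathbf S_k\rightarrow\mathbf Q$. A price function $\pi$ is arbitrage-free if for every $m\ge 1$ and queries $\mathbf Q_1,\ldots,\mathbf Q_m,\mathbf Q$ with $\{\mathbf Q_1,\ldots,\mathbf Q_m\}\rightarrow\mathbf Q$ we have $\pi(\mathbf Q)\le\sum_{i=1}^m\pi(\mathbf Q_i)$. *)

(* Defs.v *)
From Stdlib Require Import List Permutation.
From HB Require Import structures.
From mathcomp Require Import all_boot all_order all_algebra.
From mathcomp Require Import boolp reals ereal Rstruct.
Set Implicit Arguments. Unset Strict Implicit. Unset Printing Implicit Defensive.
Import Order.TTheory GRing.Theory Num.Theory.
Local Open Scope ring_scope.
Local Open Scope ereal_scope.

Notation R := Rdefinitions.R.

Record query (n : nat) := Query {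
  qv : 'rV[R]_n;
  qval : \bar R;
  qval_ge0 : 0 <= qval }.

(* Division on [0,oo] with the conventions a/0 = oo (a>0), 0/0 = 0, a/oo = 0. *)
Definition ediv (a b : \bar R) : \bar R :=
  match b with
  | EFin r => if r == 0%R then (if a == 0 then 0 else +oo) else a * (r^-1)%:E
  | _ => 0
  end.

(* Determinacy relation between finite multisets (lists up to permutation)
   of queries and queries: the smallest relation closed under the four rules. *)
Inductive determines (n : nat) : seq (query n) -> query n -> Prop :=
| det_sum (Qs : seq (query n)) (Q : query n) :
    qv Q = (\sum_(x <- Qs) qv x)%R ->
    qval Q = \sum_(x <- Qs) qval x ->
    determines Qs Q
| det_scale (Q Q' : query n) (c : R) :
    qv Q' = c *: qv Q ->
    qval Q' = (c ^+ 2)%:E * qval Q ->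
    determines [:: Q] Q'
| det_relax (Q Q' : query n) :
    qv Q' = qv Q -> qval Q <= qval Q' ->
    determines [:: Q] Q'
| det_trans (ps : seq (seq (query n) * query n)) (S : seq (query n)) (Q : query n) :
    (forall p, List.In p ps -> determines p.1 p.2) ->
    determines (map snd ps) Q ->
    Permutation S (flatten (map fst ps)) ->
    determines S Q.

Definition arbitrage_free (n : nat) (pi : 'rV[R]_n -> \bar R -> \bar R) : Prop :=
  forall (Qs : seq (query n)) (Q : query n),
    (0 < size Qs)%N -> determines Qs Q ->
    pi (qv Q) (qval Q) <= \sum_(x <- Qs) pi (qv x) (qval x).

Definition seminorm (n : nat) (f : 'rV[R]_n -> R) : Prop :=
  (forall (c : R) (q : 'rV[R]_n), f (c *: q) = (`|c| * f q)%R) /\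
  (forall q1 q2 : 'rV[R]_n, (f (q1 + q2) <= f q1 + f q2)%R).

(* Main.v *)
Require Import Defs.
From Stdlib Require Import List Permutation.
From mathcomp Require Import all_boot all_order all_algebra.
From mathcomp Require Import boolp reals ereal Rstruct ring lra.
Import Order.TTheory GRing.Theory Num.Theory.
Local Open Scope ring_scope.
Local Open Scope ereal_scope.

Lemma ediv_ge0 (x v : \bar R) : 0 <= x -> 0 <= v -> 0 <= ediv x v.
Proof.
case: v => [r||] //= hx hv.
case: eqP => _; first by case: eqP => _ //; rewrite leey.
by apply: mule_ge0 => //; rewrite lee_fin invr_ge0 -lee_fin.
Qed.

Lemma ediv0 v : ediv 0 v = 0.
Proof.
case: v => [r||] //=.
case: eqP => _; first by rewrite eqxx.
exact: mul0e.
Qed.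

Lemma edivE (x r : R) : (0 < r)%R -> ediv x%:E r%:E = (x / r)%:E.
Proof. by move=> hr /=; rewrite gt_eqF. Qed.

Lemma ediv_oo x : ediv x +oo = 0. Proof. by []. Qed.

Lemma ediv_r0 (x : R) : x <> 0%R -> ediv x%:E 0 = +oo.
Proof. by move=> hx /=; rewrite eqxx; case: eqP => // -[]. Qed.

Lemma ediv_relax (x : R) (v v' : \bar R) : (0 <= x)%R -> 0 <= v -> v <= v' ->
  ediv x%:E v' <= ediv x%:E v.
Proof.
move=> hx hv hvv.
have hv' : 0 <= v' by apply: le_trans hvv.
case: v' hvv hv' => [r'||] hvv hv' //.
  2: by apply: ediv_ge0.
case: v hv hvv => [r||] hv hvv //.
have [->|x0] := eqVneq x 0%R; first by rewrite !ediv0.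
rewrite lee_fin in hv; rewrite lee_fin in hvv.
have [->|r0] := eqVneq r 0%R; first by rewrite ediv_r0 ?leey //; apply/eqP.
have rp : (0 < r)%R by rewrite lt_def r0.
rewrite !edivE //; last by apply: lt_le_trans hvv.
rewrite lee_fin; apply: ler_wpM2l => //.
by rewrite lef_pV2 // posrE; apply: lt_le_trans hvv.
Qed.

Lemma ediv_mono (x x' : R) (v : \bar R) : (0 <= x)%R -> (x <= x')%R -> 0 <= v ->
  ediv x%:E v <= ediv x'%:E v.
Proof.
move=> hx hxx hv.
case: v hv => [r||] hv //.
rewrite lee_fin in hv.
have [->|r0] := eqVneq r 0%R.
  have [->|x0] := eqVneq x 0%R.
    rewrite ediv0; apply: ediv_ge0; rewrite lee_fin //; exact: le_trans hxx.
  have x'0 : x' <> 0%R by move=> h; move: x0; rewrite h in hxx; apply/negP; rewrite negbK eq_le hxx hx.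
  by rewrite ediv_r0 ?ediv_r0 //; apply/eqP.
have rp : (0 < r)%R by rewrite lt_def r0.
by rewrite !edivE // lee_fin ler_wpM2r // invr_ge0 ltW.
Qed.

Lemma real_ineq (a b r s : R) : (0 < r)%R -> (0 < s)%R ->
  ((a + b) ^+ 2 / (r + s) <= a ^+ 2 / r + b ^+ 2 / s)%R.
Proof.
move=> hr hs; rewrite -subr_ge0.
have -> : (a ^+ 2 / r + b ^+ 2 / s - (a + b) ^+ 2 / (r + s) =
   (a * s - b * r) ^+ 2 / (r * s * (r + s)))%R.
  field. by rewrite !lt0r_neq0 // addr_gt0.  
apply: divr_ge0; first exact: sqr_ge0.
by rewrite ltW // !mulr_gt0 // addr_gt0.
Qed.

Lemma sq0 : ((0:R) ^+ 2 = 0)%R. Proof. by rewrite expr2 mul0r. Qed.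

Lemma ediv_add (a b : R) (v w : \bar R) : (0 <= a)%R -> (0 <= b)%R -> 0 <= v -> 0 <= w ->
  ediv ((a + b) ^+ 2)%:E (v + w) <= ediv (a ^+ 2)%:E v + ediv (b ^+ 2)%:E w.
Proof.
move=> ha hb hv hw.
have gv : forall x : R, 0 <= ediv x%:E v -> ediv x%:E v != -oo.
  by move=> x h; apply/eqP => e; rewrite e in h.
have [->|a0] := eqVneq a 0%R.
  rewrite add0r sq0 ediv0 add0e; apply: ediv_relax => //; first exact: sqr_ge0.
  exact: leeDr.
have [->|b0] := eqVneq b 0%R.
  rewrite addr0 sq0 ediv0 adde0; apply: ediv_relax => //; first exact: sqr_ge0.
  exact: leeDl.
have ge := fun x (y : \bar R) => @ediv_ge0 x%:E y.
case: v hv gv => [r||] hv gv //; last first.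
  rewrite addye; last by case: w hw.
  by apply: adde_ge0; apply: ediv_ge0 => //; rewrite lee_fin sqr_ge0.
case: w hw => [s||] hw //; last first.
  rewrite addey //.
  by apply: adde_ge0; apply: ediv_ge0 => //; rewrite lee_fin sqr_ge0.
rewrite lee_fin in hv; rewrite lee_fin in hw.
have [->|r0] := eqVneq r 0%R.
  rewrite ediv_r0 ?addye ?leey //; last by apply/eqP; rewrite sqrf_eq0.
  apply/eqP => e; have : 0 <= ediv (b ^+ 2)%R%:E s%:E by apply: ediv_ge0; rewrite lee_fin ?sqr_ge0.
  by rewrite e.
have [->|s0] := eqVneq s 0%R.
  rewrite (@ediv_r0 (b ^+ 2)%R) ?addey ?leey //; last by apply/eqP; rewrite sqrf_eq0.
  by apply: gv; apply: ediv_ge0; rewrite lee_fin ?sqr_ge0.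
have rp : (0 < r)%R by rewrite lt_def r0.
have sp : (0 < s)%R by rewrite lt_def s0.
rewrite -EFinD !edivE ?addr_gt0 // -EFinD lee_fin.
exact: real_ineq.
Qed.

Lemma ediv_scale (c x : R) (v : \bar R) : c != 0%R -> 0 <= v ->
  ediv (c ^+ 2 * x)%:E ((c ^+ 2)%:E * v) = ediv x%:E v.
Proof.
move=> c0 hv.
have c2 : (0 < c ^+ 2)%R by rewrite exprn_even_gt0.
case: v hv => [r||] hv //; last by rewrite gt0_muley.
rewrite -EFinM /= mulf_eq0 (negbTE (lt0r_neq0 c2)) /=.
case: eqP => // r0.
  by rewrite !eqe mulf_eq0 (negbTE (lt0r_neq0 c2)).
rewrite -!EFinM; congr EFin; field.
by rewrite c0 andbT; apply/eqP.
Qed.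

Lemma sum_perm n (F : query n -> \bar R) (S S' : seq (query n)) :
  Permutation S S' -> \sum_(x <- S) F x = \sum_(x <- S') F x.
Proof.
elim=> [|x l l' _ IH|x y l|l l' l'' _ IH1 _ IH2]; rewrite ?big_cons //.
- by rewrite IH.
- by rewrite addeCA.
- by rewrite IH1 IH2.
Qed.

Lemma sum_le_In (A : Type) (ps : seq A) (F G : A -> \bar R) :
  (forall p, List.In p ps -> F p <= G p) -> \sum_(p <- ps) F p <= \sum_(p <- ps) G p.
Proof.
elim: ps => [|p ps IH] H; rewrite ?big_nil ?big_cons //.
apply: leeD; first by apply: H; left.
by apply: IH => q hq; apply: H; right.
Qed.

Section Conv.
Variables (n : nat) (f : 'rV[R]_n -> R).
Hypothesis f_ge0 : forall q, (0 <= f q)%R.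
Hypothesis sn : seminorm f.

Let g (q : 'rV[R]_n) (v : \bar R) := ediv ((f q) ^+ 2)%R%:E v.

Lemma f0 : f 0 = 0%R.
Proof. by have := (sn.1 0%R (0%R : 'rV[R]_n)); rewrite scale0r normr0 mul0r. Qed.

Lemma f_sum (S : seq (query n)) : (f (\sum_(x <- S) qv x) <= \sum_(x <- S) f (qv x))%R.
Proof.
elim: S => [|x S IH]; first by rewrite !big_nil f0.
rewrite !big_cons; apply: le_trans (sn.2 _ _) _.
by rewrite lerD2l.
Qed.

Lemma g_sum (S : seq (query n)) :
  ediv ((\sum_(x <- S) f (qv x)) ^+ 2)%R%:E (\sum_(x <- S) qval x)
  <= \sum_(x <- S) g (qv x) (qval x).
Proof.
elim: S => [|x S IH]; first by rewrite !big_nil sq0 ediv0.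
rewrite !big_cons; apply: le_trans; first apply: ediv_add.
- exact: f_ge0.
- by apply: sumr_ge0 => i _; apply: f_ge0.
- exact: qval_ge0.
- by apply: sume_ge0 => i _; apply: qval_ge0.
- exact: leeD2l.
Qed.

Lemma det_le S Q : determines S Q -> g (qv Q) (qval Q) <= \sum_(x <- S) g (qv x) (qval x).
Proof.
elim=> {S Q}.
- move=> Qs Q hq hv; rewrite /g hq hv.
  apply: le_trans (g_sum Qs); apply: ediv_mono.
  + exact: sqr_ge0.
  + have := f_sum Qs; have := f_ge0 (\sum_(x <- Qs) qv x); nra.
  + by apply: sume_ge0 => i _; apply: qval_ge0.
- move=> Q Q' c hq hv; rewrite big_seq1 /g hq hv sn.1.
  have [->|c0] := eqVneq c 0%R.
    rewrite normr0 mul0r sq0 ediv0; apply: ediv_ge0; rewrite ?lee_fin ?sqr_ge0 //.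
    exact: qval_ge0.
  rewrite exprMn real_normK ?num_real // ediv_scale //; exact: qval_ge0.
- move=> Q Q' hq hv; rewrite big_seq1 /g hq; apply: ediv_relax => //.
  + exact: sqr_ge0.
  + exact: qval_ge0.
- move=> ps S Q _ IHps _ IHQ hperm.
  apply: le_trans IHQ _.
  rewrite big_map (@sum_perm _ (fun x => g (qv x) (qval x)) _ _ hperm) big_flatten big_map.
  exact: sum_le_In.
Qed.

End Conv.

Theorem theorem1 (n : nat) (pi : 'rV[R]_n -> \bar R -> \bar R) (f : 'rV[R]_n -> R)
  (f_ge0 : forall q, (0 <= f q)%R)
  (hpi : forall q (v : \bar R), 0 <= v -> pi q v = ediv ((f q ^+ 2)%:E) v) :
  arbitrage_free pi <-> seminorm f.
Proof.
split; last first.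
  move=> sn Qs Q _ hd.
  rewrite hpi ?qval_ge0 //.
  under eq_bigr => x _ do rewrite hpi ?qval_ge0 //.
  exact: det_le.
move=> AF.
have h1 : (0 : \bar R) <= 1%:E by rewrite lee_fin.
have scaleH : forall c q, (ediv ((f (c *: q)) ^+ 2)%R%:E (c ^+ 2)%R%:E <= ((f q) ^+ 2)%R%:E).
  move=> c q.
  have h2 : (0 : \bar R) <= (c ^+ 2)%R%:E * 1%:E by rewrite mule1 lee_fin sqr_ge0.
  have := AF [:: Query q h1] (Query (c *: q) h2) erefl
     (@det_scale n (Query q h1) (Query (c *: q) h2) c erefl erefl).
  rewrite big_seq1 !hpi ?qval_ge0 //; cbn [qv qval]; rewrite -EFinM mulr1 [X in _ <= X -> _]edivE ?ltr01 // divr1 // ; exact: lt_le_trans ltr01 _.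
have fz : f (0%R : 'rV[R]_n) = 0%R.
  have := scaleH 0%R (0%R : 'rV[R]_n); rewrite scale0r sq0.
  have [->//|fn0] := eqVneq (f (0%R : 'rV[R]_n)) 0%R.
  rewrite ediv_r0 ?leye_eq //; last by apply/eqP; rewrite sqrf_eq0.
have L : forall c q, c != 0%R -> (f (c *: q) <= `|c| * f q)%R.
  move=> c q c0; have := scaleH c q.
  have c2 : (0 < c ^+ 2)%R by rewrite exprn_even_gt0.
  rewrite edivE // lee_fin ler_pdivrMr // => H.
  rewrite -ler_sqr ?nnegrE ?mulr_ge0 ?f_ge0 //.
  by rewrite exprMn real_normK ?num_real // mulrC.
split.
  move=> c q; have [->|c0] := eqVneq c 0%R.
    by rewrite scale0r fz normr0 mul0r.
  apply/eqP; rewrite eq_le L //=.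
  have := L (c^-1)%R (c *: q); rewrite invr_eq0 => /(_ c0).
  rewrite scalerA mulVf // scale1r normrV ?unitfE // => H.
  have nc : (0 < `|c|)%R by rewrite normr_gt0.
  rewrite -(ler_pM2l nc) in H.
  by rewrite mulrA divff ?normr_eq0 // mul1r in H.
move=> q1 q2.
pose a := f q1; pose b := f q2.
have ha : (0 : \bar R) <= a%:E by rewrite lee_fin f_ge0.
have hb : (0 : \bar R) <= b%:E by rewrite lee_fin f_ge0.
have hab : (0 : \bar R) <= a%:E + b%:E by apply: adde_ge0.
have := AF [:: Query q1 ha; Query q2 hb] (Query (q1 + q2) hab) erefl
  (@det_sum n [:: Query q1 ha; Query q2 hb] (Query (q1 + q2) hab)
     ltac:(by rewrite !big_cons big_nil addr0) ltac:(by rewrite !big_cons big_nil adde0)).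
rewrite !big_cons big_nil adde0 !hpi ?qval_ge0 //; cbn [qv qval].
have self : forall x : R, (0 <= x)%R -> ediv (x ^+ 2)%R%:E x%:E = x%:E.
  move=> x hx; have [->|x0] := eqVneq x 0%R; first by rewrite sq0 ediv0.
  by rewrite edivE ?lt_def ?x0 // expr2 mulfK.
rewrite self ?f_ge0 // self ?f_ge0 // -EFinD.
have hs : (0 <= (a + b)%R)%R by rewrite addr_ge0 ?f_ge0.
have [e|s0] := eqVneq ((a + b)%R) 0%R.
  rewrite e; have [->|fn0] := eqVneq (f (q1 + q2)%R) 0%R; first by [].
  by rewrite ediv_r0 ?leye_eq //; apply/eqP; rewrite sqrf_eq0.
have sp : (0 < (a + b)%R)%R by rewrite lt_def s0.
rewrite edivE // lee_fin ler_pdivrMr // -expr2 => H.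
by rewrite -ler_sqr ?nnegrE ?f_ge0.
Qed.
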